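(* Let $\mathcal T_0$ be a theory with signature $\Pi_0$ allowing quantifier elimination, and let $\mathcal T=\mathcal T_0\cup\mathsf{UIF}_\Sigma$ with signature $\Pi=\Pi_0\cup\Sigma$, where $\Sigma=\Sigma_s\cup\Sigma_1$ (disjoint). Let $G$ be a finite set of flat and linear ground $\Pi^C$-clauses, $C_s\subseteq C$ a set of constants occurring in $G$, and $\overline C_s$ the set consisting of $C_s$ together with all constants occurring as arguments of functions of $\Sigma_s$ in $G$. Then the $(\Pi_0\cup\Sigma_s)^{\overline C_s}$-formula $\Gamma$ obtained by applying Algorithm 1 to $\mathcal T$ (with $\mathcal K=\emptyset$), $G$, kept constants $\overline C_s$ and $T:=\mathrm{est}(\mathcal K,G)$ is a $\mathcal T$-general uniform interpolant of $G$ w.r.t. $\Sigma_s\cup\overline C_s$.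
   Context: $\mathsf{UIF}_\Sigma$ denotes the theory of uninterpreted (free) function symbols in $\Sigma$; $\mathcal T_0\cup\mathsf{UIF}_\Sigma$ is the extension of $\mathcal T_0$ by the symbols $\Sigma$ with no axioms. $\mathrm{est}(\mathcal K,G)$ is the set of ground terms starting with an extension symbol occurring in $\mathcal K$ or $G$. Flat/linear ground clauses: a ground clause is flat if all arguments of extension symbols are constants; linear if whenever a constant occurs in two terms with root symbol in $\Sigma$ the terms are identical, and no term starting with a $\Sigma$-symbol contains the same constant twice. Algorithm 1 (function elimination). Input: $\mathcal T_0$ admitting quantifier elimination; an extension $\mathcal T_0\cup\mathcal K$ with extension symbols $\Sigma_s\cup\Sigma_1$, $\mathcal K$ a finite set of flat and linear clauses; a finite set $G$ of flat and linear ground clauses; a set of constants to be kept; a finite set $T$ of flat ground terms with $\mathrm{est}(\mathcal K,G)\subseteq T$ and $\mathcal K[T]$ ground ($\mathcal K[T]$ = instances of $\mathcal K$ whose extension terms are in $T$). Step 1: flatten and purify $\mathcal K[T]\cup G$: bottom-up, replace each term $f(c_1,\dots,c_n)$ ($f$ extension symbol, $c_i$ constants) by a fresh constant $c$ and record $c\approx f(c_1,\dots,c_n)$ in $\mathsf{Def}$, obtaining $\mathcal K_0,G_0$ without extension symbols; let $\mathsf{Con}_0=\{\bigwedge_i c_i\approx d_i\to c\approx d\mid c\approx f(\bar c),d\approx f(\bar d)\in\mathsf{Def}\}$. Step 2: $G_1=\mathcal K_0\cup G_0\cup\mathsf{Con}_0$; keep constants $c_f$ introduced for terms $f(\dots)$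 with $f\in\Sigma_s$, constants occurring as arguments of $\Sigma_s$-symbols in those definitions, and the given kept constants; replace all other constants by existentially quantified variables. Step 3: eliminate these quantifiers modulo $\mathcal T_0$, obtaining quantifier-free $\Gamma_1$. Step 4: output $\Gamma$, obtained by replacing each $c_f$ by the term it names. General uniform interpolant: $\psi$ (quantifier-free, over $\Pi_0\cup\Sigma_s$ and constants $C_s$) is a $\mathcal T$-general uniform interpolant of $\phi$ w.r.t. $\Sigma_s\cup C_s$ if $\phi\models_{\mathcal T}\psi$ and for every ground $\theta$ sharing with $\phi$ only $\Pi_0$-symbols, symbols of $\Sigma_s$ and constants of $C_s$, $\phi\models_{\mathcal T}\theta$ implies $\psi\models_{\mathcal T}\theta$. *)

(* Defs.v *)
From mathcomp Require Import all_boot.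
From Stdlib Require List.
Set Implicit Arguments. Unset Strict Implicit. Unset Printing Implicit Defensive.

Section FOL.
(* Pi0 = (F0 function symbols, P0 predicate symbols); Sigma = S (extension
   function symbols).  Free constants C are indexed by nat, variables by nat. *)
Variables (F0 P0 : Type) (S : eqType).
Variables (ar0 : F0 -> nat) (arP : P0 -> nat) (arS : S -> nat).

Inductive term : Type :=
| Var of nat
| Cst of nat
| App0 of F0 & seq term
| AppS of S & seq term.

Inductive form : Type :=
| FTrue | FFalse
| FEq of term & term
| FPred of P0 & seq term
| FNot of form
| FAnd of form & form
| FOr of form & form
| FImp of form & form
| FEx of nat & form
| FAll of nat & form.

Record structure := Structure {
  dom : Type;
  iF0 : F0 -> seq dom -> dom;
  iP0 : P0 -> seq dom -> Prop;
  iS  : S -> seq dom -> dom;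
  iC  : nat -> dom }.

Fixpoint eval (M : structure) (e : nat -> dom M) (t : term) : dom M :=
  match t with
  | Var n => e n
  | Cst c => @iC M c
  | App0 f ts => @iF0 M f (map (@eval M e) ts)
  | AppS f ts => @iS M f (map (@eval M e) ts)
  end.

Definition upd (M : structure) (e : nat -> dom M) (x : nat) (d : dom M) :=
  fun y => if y == x then d else e y.

Fixpoint holds (M : structure) (e : nat -> dom M) (phi : form) : Prop :=
  match phi with
  | FTrue => True
  | FFalse => False
  | FEq t u => @eval M e t = @eval M e u
  | FPred p ts => @iP0 M p (map (@eval M e) ts)
  | FNot a => ~ @holds M e a
  | FAnd a b => @holds M e a /\ @holds M e b
  | FOr a b => @holds M e a \/ @holds M e b
  | FImp a b => @holds M e a -> @holds M e b
  | FEx x a => exists d, @holds M (upd e x d) a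
  | FAll x a => forall d, @holds M (upd e x d) a
  end.

Fixpoint term_wf (t : term) : bool :=
  match t with
  | Var _ | Cst _ => true
  | App0 f ts => (size ts == ar0 f) && all term_wf ts
  | AppS f ts => (size ts == arS f) && all term_wf ts
  end.

Fixpoint form_wf (phi : form) : bool :=
  match phi with
  | FTrue | FFalse => true
  | FEq t u => term_wf t && term_wf u
  | FPred p ts => (size ts == arP p) && all term_wf ts
  | FNot a => form_wf a
  | FAnd a b | FOr a b | FImp a b => form_wf a && form_wf b
  | FEx _ a | FAll _ a => form_wf a
  end.

Fixpoint qf (phi : form) : bool :=
  match phi with
  | FNot a => qf a
  | FAnd a b | FOr a b | FImp a b => qf a && qf b
  | FEx _ _ | FAll _ _ => false
  | _ => true
  end.

Fixpoint symS_t (t : term) : seq S :=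
  match t with
  | Var _ | Cst _ => [::]
  | App0 _ ts => flatten (map symS_t ts)
  | AppS f ts => f :: flatten (map symS_t ts)
  end.

Fixpoint symS_f (phi : form) : seq S :=
  match phi with
  | FTrue | FFalse => [::]
  | FEq t u => symS_t t ++ symS_t u
  | FPred _ ts => flatten (map symS_t ts)
  | FNot a => symS_f a
  | FAnd a b | FOr a b | FImp a b => symS_f a ++ symS_f b
  | FEx _ a | FAll _ a => symS_f a
  end.

Fixpoint consts_t (t : term) : seq nat :=
  match t with
  | Var _ => [::]
  | Cst c => [:: c]
  | App0 _ ts | AppS _ ts => flatten (map consts_t ts)
  end.

Fixpoint consts_f (phi : form) : seq nat :=
  match phi with
  | FTrue | FFalse => [::]
  | FEq t u => consts_t t ++ consts_t u
  | FPred _ ts => flatten (map consts_t ts)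
  | FNot a => consts_f a
  | FAnd a b | FOr a b | FImp a b => consts_f a ++ consts_f b
  | FEx _ a | FAll _ a => consts_f a
  end.

Fixpoint vars_t (t : term) : seq nat :=
  match t with
  | Var n => [:: n]
  | Cst _ => [::]
  | App0 _ ts | AppS _ ts => flatten (map vars_t ts)
  end.

Fixpoint fv_f (phi : form) : seq nat :=
  match phi with
  | FTrue | FFalse => [::]
  | FEq t u => vars_t t ++ vars_t u
  | FPred _ ts => flatten (map vars_t ts)
  | FNot a => fv_f a
  | FAnd a b | FOr a b | FImp a b => fv_f a ++ fv_f b
  | FEx x a | FAll x a => [seq y <- fv_f a | y != x]
  end.

Definition ground (phi : form) : bool := qf phi && (fv_f phi == [::]).

Definition is_atom (phi : form) : bool :=
  match phi with FEq _ _ | FPred _ _ => true | _ => false end.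

Definition literal := (bool * form)%type.
Definition clause := seq literal.

Definition lit_form (l : literal) : form := if l.1 then l.2 else FNot l.2.
Definition clause_form (C : clause) : form :=
  foldr (fun l acc => FOr (lit_form l) acc) FFalse C.
Definition clauses_form (G : seq clause) : form := foldr FAnd FTrue (map clause_form G).

Definition ground_clause (C : clause) : bool :=
  all (fun l => is_atom l.2 && ground l.2 && form_wf l.2) C.

Definition is_cst (t : term) : bool := if t is Cst _ then true else false.

Fixpoint flat_t (t : term) : bool :=
  match t with
  | Var _ | Cst _ => true
  | App0 _ ts => all flat_t ts
  | AppS _ ts => all is_cst ts
  end.

Fixpoint flat_f (phi : form) : bool :=
  match phi with
  | FTrue | FFalse => true
  | FEq t u => flat_t t && flat_t u
  | FPred _ ts => all flat_t ts
  | FNot a => flat_f a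
  | FAnd a b | FOr a b | FImp a b => flat_f a && flat_f b
  | FEx _ a | FAll _ a => flat_f a
  end.

Definition flat_clause (C : clause) : bool := all (fun l => flat_f l.2) C.

Fixpoint ext_t (t : term) : seq term :=
  match t with
  | Var _ | Cst _ => [::]
  | App0 _ ts => flatten (map ext_t ts)
  | AppS f ts => AppS f ts :: flatten (map ext_t ts)
  end.

Fixpoint ext_f (phi : form) : seq term :=
  match phi with
  | FTrue | FFalse => [::]
  | FEq t u => ext_t t ++ ext_t u
  | FPred _ ts => flatten (map ext_t ts)
  | FNot a => ext_f a
  | FAnd a b | FOr a b | FImp a b => ext_f a ++ ext_f b
  | FEx _ a | FAll _ a => ext_f a
  end.

Definition ext_clause (C : clause) : seq term := flatten [seq ext_f l.2 | l <- C].

Definition linear_clause (C : clause) : Prop :=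
  (forall t1 t2 c, List.In t1 (ext_clause C) -> List.In t2 (ext_clause C) ->
     c \in consts_t t1 -> c \in consts_t t2 -> t1 = t2) /\
  (forall t, List.In t (ext_clause C) -> uniq (consts_t t)).

Definition est (G : seq clause) : seq term := flatten (map ext_clause G).

Definition consts_G (G : seq clause) : seq nat := consts_f (clauses_form G).
Definition symS_G (G : seq clause) : seq S := symS_f (clauses_form G).

Variable is_s : S -> bool.  (* membership in Sigma_s; Sigma_1 is the complement *)

Definition is_s_term (t : term) : bool := if t is AppS f _ then is_s f else false.

Section Alg.
Variable name : term -> nat.   (* the fresh constant naming each extension term *)

Fixpoint purify_t (t : term) : term :=
  match t with
  | Var n => Var n
  | Cst c => Cst c
  | App0 f ts => App0 f (map purify_t ts)
  | AppS f ts => Cst (name (AppS f ts))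
  end.

Fixpoint purify_f (phi : form) : form :=
  match phi with
  | FTrue => FTrue | FFalse => FFalse
  | FEq t u => FEq (purify_t t) (purify_t u)
  | FPred p ts => FPred p (map purify_t ts)
  | FNot a => FNot (purify_f a)
  | FAnd a b => FAnd (purify_f a) (purify_f b)
  | FOr a b => FOr (purify_f a) (purify_f b)
  | FImp a b => FImp (purify_f a) (purify_f b)
  | FEx x a => FEx x (purify_f a)
  | FAll x a => FAll x (purify_f a)
  end.

Definition con_pair (t1 t2 : term) : form :=
  match t1, t2 with
  | AppS f a, AppS g b =>
      if (f == g) && (size a == size b) then
        FImp (foldr FAnd FTrue [seq FEq p.1 p.2 | p <- zip a b])
             (FEq (Cst (name t1)) (Cst (name t2)))
      else FTrue
  | _, _ => FTrue
  end.

Definition Con0 (ts : seq term) : form :=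
  foldr FAnd FTrue [seq con_pair p.1 p.2 | p <- [seq (t1, t2) | t1 <- ts, t2 <- ts]].

Definition G1 (G : seq clause) : form :=
  FAnd (purify_f (clauses_form G)) (Con0 (est G)).

Definition estS (G : seq clause) : seq term := [seq t <- est G | is_s_term t].
Definition argsS (G : seq clause) : seq nat := flatten (map consts_t (estS G)).
Definition Cbar (Cs : seq nat) (G : seq clause) : seq nat := Cs ++ argsS G.

Definition kept (Cs : seq nat) (G : seq clause) : seq nat :=
  Cbar Cs G ++ map name (estS G).

Fixpoint abstr_t (xs : seq nat) (t : term) : term :=
  match t with
  | Var n => Var n
  | Cst c => if c \in xs then Var c else Cst c
  | App0 f ts => App0 f (map (abstr_t xs) ts)
  | AppS f ts => AppS f (map (abstr_t xs) ts)
  end.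

Fixpoint abstr_f (xs : seq nat) (phi : form) : form :=
  match phi with
  | FTrue => FTrue | FFalse => FFalse
  | FEq t u => FEq (abstr_t xs t) (abstr_t xs u)
  | FPred p ts => FPred p (map (abstr_t xs) ts)
  | FNot a => FNot (abstr_f xs a)
  | FAnd a b => FAnd (abstr_f xs a) (abstr_f xs b)
  | FOr a b => FOr (abstr_f xs a) (abstr_f xs b)
  | FImp a b => FImp (abstr_f xs a) (abstr_f xs b)
  | FEx x a => FEx x (abstr_f xs a)
  | FAll x a => FAll x (abstr_f xs a)
  end.

Definition exclose (keep : seq nat) (phi : form) : form :=
  let xs := undup [seq c <- consts_f phi | c \notin keep] in
  foldr FEx (abstr_f xs phi) xs.

Definition step2 (Cs : seq nat) (G : seq clause) : form := exclose (kept Cs G) (G1 G).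

Fixpoint unname_t (ts : seq term) (t : term) : term :=
  match t with
  | Var n => Var n
  | Cst c => let i := find (fun u => name u == c) ts in
             if i < size ts then nth t ts i else Cst c
  | App0 f us => App0 f (map (unname_t ts) us)
  | AppS f us => AppS f (map (unname_t ts) us)
  end.

Fixpoint unname_f (ts : seq term) (phi : form) : form :=
  match phi with
  | FTrue => FTrue | FFalse => FFalse
  | FEq t u => FEq (unname_t ts t) (unname_t ts u)
  | FPred p us => FPred p (map (unname_t ts) us)
  | FNot a => FNot (unname_f ts a)
  | FAnd a b => FAnd (unname_f ts a) (unname_f ts b)
  | FOr a b => FOr (unname_f ts a) (unname_f ts b)
  | FImp a b => FImp (unname_f ts a) (unname_f ts b)
  | FEx x a => FEx x (unname_f ts a)
  | FAll x a => FAll x (unname_f ts a)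
  end.

Definition step4 (G : seq clause) (Gamma1 : form) : form := unname_f (estS G) Gamma1.

End Alg.

Definition model (T0 : form -> Prop) (M : structure) : Prop :=
  forall phi, T0 phi -> forall e : nat -> dom M, holds e phi.

Definition Pi0_theory (T0 : form -> Prop) : Prop :=
  forall phi, T0 phi ->
    [/\ form_wf phi, symS_f phi = [::], consts_f phi = [::] & fv_f phi = [::]].

Definition allows_QE (T0 : form -> Prop) : Prop :=
  forall phi, form_wf phi -> symS_f phi = [::] -> consts_f phi = [::] ->
  exists psi, [/\ qf psi && form_wf psi, symS_f psi = [::], consts_f psi = [::],
    {subset fv_f psi <= fv_f phi} &
    forall M, model T0 M -> forall e : nat -> dom M, holds e phi <-> holds e psi].

(* entailment modulo T = T0 u UIF_Sigma: models of T0 with arbitrary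
   interpretation of the Sigma symbols and of the constants *)
Definition entailsT (T0 : form -> Prop) (phi psi : form) : Prop :=
  forall M, model T0 M -> forall e : nat -> dom M, holds e phi -> holds e psi.

Definition gen_unif_interp (T0 : form -> Prop) (Cs : seq nat) (phi psi : form) : Prop :=
  [/\ ground psi && form_wf psi, all is_s (symS_f psi), {subset consts_f psi <= Cs},
      entailsT T0 phi psi &
      forall theta, ground theta -> form_wf theta ->
        (forall f, f \in symS_f theta -> f \in symS_f phi -> is_s f) ->
        (forall c, c \in consts_f theta -> c \in consts_f phi -> c \in Cs) ->
        entailsT T0 phi theta -> entailsT T0 psi theta].

End FOL.

(* Main.v *)
Require Import Defs.
From mathcomp Require Import all_boot.
From Stdlib Require List FunctionalExtensionality ClassicalEpsilon Classical.
Set Implicit Arguments. Unset Strict Implicit. Unset Printing Implicit Defensive.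

Section H.
Variables (F0 P0 : Type) (S : eqType).
Notation term := (term F0 S).
Notation form := (form F0 P0 S).
Notation structure := (structure F0 P0 S).

Section TI.
Variable P : term -> Prop.
Hypotheses (HV : forall n, P (Var _ _ n)) (HC : forall c, P (Cst _ _ c))
  (H0 : forall f ts, (forall t, List.In t ts -> P t) -> P (App0 f ts))
  (HS : forall f ts, (forall t, List.In t ts -> P t) -> P (AppS f ts)).
Fixpoint tind (t : term) : P t :=
  match t with
  | Var n => HV n
  | Cst c => HC c
  | App0 f ts => H0 f ((fix go (l : seq term) : forall u, List.In u l -> P u :=
       match l with
       | nil => fun u H => False_ind _ H
       | v :: vs => fun u H => match H with
                    | or_introl e => eq_ind v P (tind v) u e
                    | or_intror H' => go vs u H' end end) ts)
  | AppS f ts => HS f ((fix go (l : seq term) : forall u, List.In u l -> P u :=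
       match l with
       | nil => fun u H => False_ind _ H
       | v :: vs => fun u H => match H with
                    | or_introl e => eq_ind v P (tind v) u e
                    | or_intror H' => go vs u H' end end) ts)
  end.
End TI.

Lemma map_In (A B : Type) (f g : A -> B) (l : seq A) :
  (forall x, List.In x l -> f x = g x) -> map f l = map g l.
Proof. elim: l => //= a l IH H; rewrite H ?IH //; auto. Qed.

Lemma in_flat (A : Type) (B : eqType) (k : A -> seq B) (l : seq A) x c :
  List.In x l -> c \in k x -> c \in flatten (map k l).
Proof. elim: l => //= a l IH [->|H] Hc; rewrite mem_cat; first by rewrite Hc.
by rewrite (IH H Hc) orbT. Qed.

Lemma flat_in (A : Type) (B : eqType) (k : A -> seq B) (l : seq A) c :
  c \in flatten (map k l) -> exists x, List.In x l /\ c \in k x.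
Proof. elim: l => //= a l IH; rewrite mem_cat => /orP [H|/IH [x [H1 H2]]];
  [exists a | exists x]; auto. Qed.

Lemma In_flat (A B : Type) (k : A -> seq B) (l : seq A) c :
  List.In c (flatten (map k l)) <-> exists x, List.In x l /\ List.In c (k x).
Proof.
elim: l => /= [|a l IH]; first by split => // [[x []]].
rewrite List.in_app_iff IH; split.
- by move=> [H|[x [H1 H2]]]; [exists a | exists x]; auto.
- by move=> [x [[<-|H1] H2]]; auto; right; exists x.
Qed.

Lemma In_filter (A : Type) (p : pred A) (l : seq A) x :
  List.In x (filter p l) <-> List.In x l /\ p x.
Proof. elim: l => /= [|a l IH]; first by split => // [[]].
case: ifP => Hp' /=; rewrite IH; split.
- by move=> [<-|[]]; auto.
- by move=> [[<-|] H]; auto.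
- by move=> []; auto.
- by move=> [[E|] H]; auto; rewrite E H in Hp'.
Qed.

Lemma In_nth (A : Type) (x0 : A) (s : seq A) i : i < size s -> List.In (nth x0 s i) s.
Proof. elim: s i => //= a s IH [|i] Hi; [by left | right; exact: IH]. Qed.

Definition setSC (M : structure) (h : S -> seq (dom M) -> dom M) (g : nat -> dom M) : structure :=
  @Structure F0 P0 S (dom M) (@iF0 _ _ _ M) (@iP0 _ _ _ M) h g.
Arguments setSC : clear implicits.

Lemma agree_t (M : structure) h g (e : nat -> dom M) (t : term) :
  (forall c, c \in consts_t t -> g c = iC M c) ->
  (forall f, f \in symS_t t -> h f = @iS _ _ _ M f) ->
  @eval _ _ _ (setSC M h g) e t = @eval _ _ _ M e t.
Proof.
elim/tind: t.
- by [].
- by move=> c Hc _ /=; apply: Hc; rewrite inE.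
- move=> f ts IH Hc Hs /=; congr (@iF0 _ _ _ M f _); apply: map_In => t Ht; apply: IH => // [c|f'] H;
   [apply: Hc | apply: Hs]; exact: in_flat H.
- move=> f ts IH Hc Hs /=.
  rewrite Hs ?inE ?eqxx //; congr (@iS _ _ _ M f _); apply: map_In => t Ht; apply: IH => // [c|f'] H;
   [apply: Hc | apply: Hs]; rewrite ?inE; [|apply/orP; right]; exact: in_flat H.
Qed.

Lemma agree_f (M : structure) h g (phi : form) :
  (forall c, c \in consts_f phi -> g c = iC M c) ->
  (forall f, f \in symS_f phi -> h f = @iS _ _ _ M f) ->
  forall e : nat -> dom M, @holds _ _ _ (setSC M h g) e phi <-> @holds _ _ _ M e phi.
Proof.
elim: phi => //= [t u|p ts|a IH|a IHa b IHb|a IHa b IHb|a IHa b IHb|x a IH|x a IH] Hc Hs e.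
- rewrite !agree_t // => [c H|f H|c H|f H]; [apply: Hc|apply: Hs|apply: Hc|apply: Hs];
   rewrite mem_cat H ?orbT //.
- suff -> : map (@eval _ _ _ (setSC M h g) e) ts = map (@eval _ _ _ M e) ts by [].
  apply: map_In => t Ht; apply: agree_t => [c|f] H; [apply: Hc|apply: Hs]; exact: in_flat H.
- by rewrite (IH Hc Hs).
- have Hca : forall c, c \in consts_f a -> g c = iC M c by move=> c H; apply: Hc; rewrite mem_cat H.
  have Hcb : forall c, c \in consts_f b -> g c = iC M c by move=> c H; apply: Hc; rewrite mem_cat H orbT.
  have Hsa : forall f, f \in symS_f a -> h f = @iS _ _ _ M f by move=> f H; apply: Hs; rewrite mem_cat H.
  have Hsb : forall f, f \in symS_f b -> h f = @iS _ _ _ M f by move=> f H; apply: Hs; rewrite mem_cat H orbT.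
  by rewrite (IHa Hca Hsa e) (IHb Hcb Hsb e).
- have Hca : forall c, c \in consts_f a -> g c = iC M c by move=> c H; apply: Hc; rewrite mem_cat H.
  have Hcb : forall c, c \in consts_f b -> g c = iC M c by move=> c H; apply: Hc; rewrite mem_cat H orbT.
  have Hsa : forall f, f \in symS_f a -> h f = @iS _ _ _ M f by move=> f H; apply: Hs; rewrite mem_cat H.
  have Hsb : forall f, f \in symS_f b -> h f = @iS _ _ _ M f by move=> f H; apply: Hs; rewrite mem_cat H orbT.
  by rewrite (IHa Hca Hsa e) (IHb Hcb Hsb e).
- have Hca : forall c, c \in consts_f a -> g c = iC M c by move=> c H; apply: Hc; rewrite mem_cat H.
  have Hcb : forall c, c \in consts_f b -> g c = iC M c by move=> c H; apply: Hc; rewrite mem_cat H orbT.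
  have Hsa : forall f, f \in symS_f a -> h f = @iS _ _ _ M f by move=> f H; apply: Hs; rewrite mem_cat H.
  have Hsb : forall f, f \in symS_f b -> h f = @iS _ _ _ M f by move=> f H; apply: Hs; rewrite mem_cat H orbT.
  by rewrite (IHa Hca Hsa e) (IHb Hcb Hsb e).
- split; move=> [d H]; exists d;
    first [exact: (proj1 (IH Hc Hs _) H) | exact: (proj2 (IH Hc Hs _) H)].
- split; move=> H d;
    first [exact: (proj1 (IH Hc Hs _) (H d)) | exact: (proj2 (IH Hc Hs _) (H d))].
Qed.


Fixpoint fmap (tau : term -> term) (phi : form) : form :=
  match phi with
  | FTrue => FTrue _ _ _ | FFalse => FFalse _ _ _
  | FEq t u => FEq P0 (tau t) (tau u)
  | FPred p ts => FPred p (map tau ts)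
  | FNot a => FNot (fmap tau a)
  | FAnd a b => FAnd (fmap tau a) (fmap tau b)
  | FOr a b => FOr (fmap tau a) (fmap tau b)
  | FImp a b => FImp (fmap tau a) (fmap tau b)
  | FEx x a => FEx x (fmap tau a)
  | FAll x a => FAll x (fmap tau a)
  end.

Fixpoint terms_f (phi : form) : seq term :=
  match phi with
  | FTrue | FFalse => [::]
  | FEq t u => [:: t; u]
  | FPred _ ts => ts
  | FNot a => terms_f a
  | FAnd a b | FOr a b | FImp a b => terms_f a ++ terms_f b
  | FEx _ a | FAll _ a => terms_f a
  end.

Lemma fmap_holds (M : structure) h g (e1 e2 : nat -> dom M) tau1 tau2 (phi : form) :
  qf phi ->
  (forall t, List.In t (terms_f phi) ->
     @eval _ _ _ M e1 (tau1 t) = @eval _ _ _ (setSC M h g) e2 (tau2 t)) ->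
  (@holds _ _ _ M e1 (fmap tau1 phi) <-> @holds _ _ _ (setSC M h g) e2 (fmap tau2 phi)).
Proof.
elim: phi => //= [t u|p ts|a IH|a IHa b IHb|a IHa b IHb|a IHa b IHb] Hq H.
- by rewrite H ?H; auto.
- rewrite -!map_comp (map_In (g := fun t => @eval _ _ _ (setSC M h g) e2 (tau2 t))) //.
- by rewrite IH.
- move/andP: Hq => [Ha Hb].
  rewrite IHa ?IHb // => t Ht; apply: H; rewrite List.in_app_iff; auto.
- move/andP: Hq => [Ha Hb].
  rewrite IHa ?IHb // => t Ht; apply: H; rewrite List.in_app_iff; auto.
- move/andP: Hq => [Ha Hb].
  rewrite IHa ?IHb // => t Ht; apply: H; rewrite List.in_app_iff; auto.
Qed.

Lemma fmap_id (phi : form) : fmap id phi = phi.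
Proof. elim: phi => //= [p ts|a ->|a -> b ->|a -> b ->|a -> b ->|x a ->|x a ->] //.
by rewrite map_id. Qed.

Lemma terms_consts (phi : form) t c :
  List.In t (terms_f phi) -> c \in consts_t t -> c \in consts_f phi.
Proof.
elim: phi => //= [u v|p ts|a IHa b IHb|a IHa b IHb|a IHa b IHb].
- by move=> [<-|[<-|[]]] H; rewrite mem_cat H ?orbT.
- exact: in_flat.
- by rewrite List.in_app_iff mem_cat => -[H|H] Hc; [rewrite IHa|rewrite IHb ?orbT].
- by rewrite List.in_app_iff mem_cat => -[H|H] Hc; [rewrite IHa|rewrite IHb ?orbT].
- by rewrite List.in_app_iff mem_cat => -[H|H] Hc; [rewrite IHa|rewrite IHb ?orbT].
Qed.

Lemma terms_symS (phi : form) t c :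
  List.In t (terms_f phi) -> c \in symS_t t -> c \in symS_f phi.
Proof.
elim: phi => //= [u v|p ts|a IHa b IHb|a IHa b IHb|a IHa b IHb].
- by move=> [<-|[<-|[]]] H; rewrite mem_cat H ?orbT.
- exact: in_flat.
- by rewrite List.in_app_iff mem_cat => -[H|H] Hc; [rewrite IHa|rewrite IHb ?orbT].
- by rewrite List.in_app_iff mem_cat => -[H|H] Hc; [rewrite IHa|rewrite IHb ?orbT].
- by rewrite List.in_app_iff mem_cat => -[H|H] Hc; [rewrite IHa|rewrite IHb ?orbT].
Qed.

Lemma terms_vars (phi : form) t c :
  qf phi -> List.In t (terms_f phi) -> c \in vars_t t -> c \in fv_f phi.
Proof.
elim: phi => //= [u v|p ts|a IHa b IHb|a IHa b IHb|a IHa b IHb].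
- by move=> _ [<-|[<-|[]]] H; rewrite mem_cat H ?orbT.
- move=> _; exact: in_flat.
- by move=> /andP[qa qb]; rewrite List.in_app_iff mem_cat => -[H|H] Hc; [rewrite IHa|rewrite IHb ?orbT].
- by move=> /andP[qa qb]; rewrite List.in_app_iff mem_cat => -[H|H] Hc; [rewrite IHa|rewrite IHb ?orbT].
- by move=> /andP[qa qb]; rewrite List.in_app_iff mem_cat => -[H|H] Hc; [rewrite IHa|rewrite IHb ?orbT].
Qed.

Lemma all_In (A : Type) (p : pred A) (l : seq A) x : all p l -> List.In x l -> p x.
Proof. elim: l => //= a l IH /andP[Ha Hl] [<-|H]; auto. Qed.

Lemma In_all (A : Type) (p : pred A) (l : seq A) : (forall x, List.In x l -> p x) -> all p l.
Proof. elim: l => //= a l IH H; rewrite H ?IH //; auto. Qed.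

Lemma terms_flat (phi : form) t : flat_f phi -> List.In t (terms_f phi) -> flat_t t.
Proof.
elim: phi => //= [u v|p ts|a IHa b IHb|a IHa b IHb|a IHa b IHb].
- by move=> /andP[H1 H2] [<-|[<-|[]]].
- exact: all_In.
- by move=> /andP[qa qb]; rewrite List.in_app_iff => -[H|H]; auto.
- by move=> /andP[qa qb]; rewrite List.in_app_iff => -[H|H]; auto.
- by move=> /andP[qa qb]; rewrite List.in_app_iff => -[H|H]; auto.
Qed.

Lemma terms_wf ar0 arP arS (phi : form) t :
  form_wf ar0 arP arS phi -> List.In t (terms_f phi) -> term_wf ar0 arS t.
Proof.
elim: phi => //= [u v|p ts|a IHa b IHb|a IHa b IHb|a IHa b IHb].
- by move=> /andP[H1 H2] [<-|[<-|[]]].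
- move=> /andP[_]; exact: all_In.
- by move=> /andP[qa qb]; rewrite List.in_app_iff => -[H|H]; auto.
- by move=> /andP[qa qb]; rewrite List.in_app_iff => -[H|H]; auto.
- by move=> /andP[qa qb]; rewrite List.in_app_iff => -[H|H]; auto.
Qed.

Lemma ext_terms (phi : form) u :
  List.In u (ext_f phi) -> exists t, List.In t (terms_f phi) /\ List.In u (ext_t t).
Proof.
elim: phi => //= [t v|p ts|a IHa b IHb|a IHa b IHb|a IHa b IHb].
- rewrite List.in_app_iff => -[H|H]; [exists t|exists v]; auto.
- by rewrite In_flat.
- rewrite List.in_app_iff => -[/IHa|/IHb] [t [H1 H2]]; exists t; rewrite List.in_app_iff; auto.
- rewrite List.in_app_iff => -[/IHa|/IHb] [t [H1 H2]]; exists t; rewrite List.in_app_iff; auto.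
- rewrite List.in_app_iff => -[/IHa|/IHb] [t [H1 H2]]; exists t; rewrite List.in_app_iff; auto.
Qed.

Lemma consts_fmap tau (phi : form) c :
  c \in consts_f (fmap tau phi) -> exists t, List.In t (terms_f phi) /\ c \in consts_t (tau t).
Proof.
elim: phi => //= [t v|p ts|a IHa b IHb|a IHa b IHb|a IHa b IHb].
- rewrite mem_cat => /orP[H|H]; [exists t|exists v]; auto.
- by rewrite -map_comp => /flat_in.
- rewrite mem_cat => /orP[/IHa|/IHb] [t [H1 H2]]; exists t; rewrite List.in_app_iff; auto.
- rewrite mem_cat => /orP[/IHa|/IHb] [t [H1 H2]]; exists t; rewrite List.in_app_iff; auto.
- rewrite mem_cat => /orP[/IHa|/IHb] [t [H1 H2]]; exists t; rewrite List.in_app_iff; auto.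
Qed.

Lemma symS_fmap tau (phi : form) c :
  c \in symS_f (fmap tau phi) -> exists t, List.In t (terms_f phi) /\ c \in symS_t (tau t).
Proof.
elim: phi => //= [t v|p ts|a IHa b IHb|a IHa b IHb|a IHa b IHb].
- rewrite mem_cat => /orP[H|H]; [exists t|exists v]; auto.
- by rewrite -map_comp => /flat_in.
- rewrite mem_cat => /orP[/IHa|/IHb] [t [H1 H2]]; exists t; rewrite List.in_app_iff; auto.
- rewrite mem_cat => /orP[/IHa|/IHb] [t [H1 H2]]; exists t; rewrite List.in_app_iff; auto.
- rewrite mem_cat => /orP[/IHa|/IHb] [t [H1 H2]]; exists t; rewrite List.in_app_iff; auto.
Qed.

Lemma fv_fmap tau (phi : form) c : qf phi ->
  c \in fv_f (fmap tau phi) -> exists t, List.In t (terms_f phi) /\ c \in vars_t (tau t).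
Proof.
elim: phi => //= [t v|p ts|a IHa b IHb|a IHa b IHb|a IHa b IHb].
- rewrite mem_cat => _ /orP[H|H]; [exists t|exists v]; auto.
- by rewrite -map_comp => _ /flat_in.
- move=> /andP[qa qb]; rewrite mem_cat => /orP[/(IHa qa)|/(IHb qb)] [t [H1 H2]]; exists t; rewrite List.in_app_iff; auto.
- move=> /andP[qa qb]; rewrite mem_cat => /orP[/(IHa qa)|/(IHb qb)] [t [H1 H2]]; exists t; rewrite List.in_app_iff; auto.
- move=> /andP[qa qb]; rewrite mem_cat => /orP[/(IHa qa)|/(IHb qb)] [t [H1 H2]]; exists t; rewrite List.in_app_iff; auto.
Qed.

Lemma qf_fmap tau (phi : form) : qf (fmap tau phi) = qf phi.
Proof. elim: phi => //= *; congruence. Qed.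

Lemma wf_fmap ar0 arP arS tau (phi : form) :
  form_wf ar0 arP arS phi -> (forall t, List.In t (terms_f phi) -> term_wf ar0 arS (tau t)) ->
  form_wf ar0 arP arS (fmap tau phi).
Proof.
elim: phi => //= [t v|p ts|a IHa b IHb|a IHa b IHb|a IHa b IHb].
- by move=> _ H; rewrite !H; auto.
- move=> /andP[Hs _] H; rewrite size_map Hs /= all_map.
  by apply: In_all => t Ht; apply: H.
- move=> /andP[qa qb] H; rewrite IHa ?IHb // => t Ht; apply: H; rewrite List.in_app_iff; auto.
- move=> /andP[qa qb] H; rewrite IHa ?IHb // => t Ht; apply: H; rewrite List.in_app_iff; auto.
- move=> /andP[qa qb] H; rewrite IHa ?IHb // => t Ht; apply: H; rewrite List.in_app_iff; auto.
Qed.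


Lemma In_ext_self (t : term) : (exists f ts, t = AppS f ts) -> List.In t (ext_t t).
Proof. by move=> [f [ts ->]]; left. Qed.

Lemma ext_gen (P : term -> term -> Prop) :
  (forall t, P t t) -> (forall u t ts f, List.In t ts -> P u t -> P u (App0 f ts)) ->
  (forall u t ts f, List.In t ts -> P u t -> P u (AppS f ts)) ->
  forall t u, List.In u (ext_t t) -> P u t.
Proof.
move=> Hr H0 HS; elim/tind => //= [f ts IH|f ts IH] u.
- by rewrite In_flat => -[t [H1 H2]]; apply: (H0 u t) => //; apply: IH.
- move=> [<-|]; first exact: Hr.
  by rewrite In_flat => -[t [H1 H2]]; apply: (HS u t) => //; apply: IH.
Qed.

Lemma ext_consts (t u : term) c : List.In u (ext_t t) -> c \in consts_t u -> c \in consts_t t.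
Proof.
move: t u; apply: (ext_gen (P := fun u t => c \in consts_t u -> c \in consts_t t)) => //=
  u t ts f Ht IH Hc; exact: (in_flat Ht (IH Hc)).
Qed.

Lemma ext_vars (t u : term) c : List.In u (ext_t t) -> c \in vars_t u -> c \in vars_t t.
Proof.
move: t u; apply: (ext_gen (P := fun u t => c \in vars_t u -> c \in vars_t t)) => //=
  u t ts f Ht IH Hc; exact: (in_flat Ht (IH Hc)).
Qed.

Lemma ext_symS (t u : term) c : List.In u (ext_t t) -> c \in symS_t u -> c \in symS_t t.
Proof.
move: t u; apply: (ext_gen (P := fun u t => c \in symS_t u -> c \in symS_t t)) => //=.
- move=> u t ts f Ht IH Hc; exact: (in_flat Ht (IH Hc)).
- move=> u t ts f Ht IH Hc; rewrite inE (in_flat Ht (IH Hc)); exact: orbT.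
Qed.

Lemma ext_wf ar0 arS (t u : term) : List.In u (ext_t t) -> term_wf ar0 arS t -> term_wf ar0 arS u.
Proof.
move: t u; apply: (ext_gen (P := fun u t => term_wf ar0 arS t -> term_wf ar0 arS u)) => //=.
- move=> u t ts f Ht IH /andP[_ H]; apply: IH; exact: all_In H Ht.
- move=> u t ts f Ht IH /andP[_ H]; apply: IH; exact: all_In H Ht.
Qed.

Lemma ext_flat (t u : term) : List.In u (ext_t t) -> flat_t t ->
  exists f ts, u = AppS f ts /\ all (@is_cst F0 S) ts.
Proof.
elim/tind: t u => //= [f ts IH|f ts IH] u.
- rewrite In_flat => -[t [H1 H2]] H; apply: (IH t) => //; exact: all_In H H1.
- move=> [<-|]; first by move=> H; exists f, ts.
  rewrite In_flat => -[t [H1 H2]] H.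
  move: (all_In H H1); case: t H1 H2 => //.
Qed.

Lemma purify_fmap name (phi : form) : purify_f name phi = fmap (purify_t name) phi.
Proof. by elim: phi => //= *; congruence. Qed.
Lemma unname_fmap name ts (phi : form) : unname_f name ts phi = fmap (unname_t name ts) phi.
Proof. by elim: phi => //= *; congruence. Qed.
Lemma abstr_fmap xs (phi : form) : abstr_f xs phi = fmap (abstr_t xs) phi.
Proof. by elim: phi => //= *; congruence. Qed.

Lemma purify_t_eval (M : structure) h g (e : nat -> dom M) name (t : term) :
  (forall c, c \in consts_t t -> iC M c = g c) ->
  (forall u, List.In u (ext_t t) -> @eval _ _ _ M e u = g (name u)) ->
  @eval _ _ _ M e t = @eval _ _ _ (setSC M h g) e (purify_t name t).
Proof.
elim/tind: t => //= [c Hc _|f ts IH Hc He|f ts IH Hc He].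
- by apply: Hc; rewrite inE.
- congr (@iF0 _ _ _ M f _); rewrite -map_comp; apply: map_In => t Ht; apply: IH => //.
  + move=> c H; apply: Hc; exact: in_flat H.
  + move=> u Hu; apply: He; rewrite In_flat; exists t; auto.
- by apply: (He (AppS f ts)); left.
Qed.

Lemma unname_t_eval (M : structure) (e : nat -> dom M) name ts (t : term) :
  @eval _ _ _ M e (unname_t name ts t) =
  @eval _ _ _ (setSC M (@iS _ _ _ M) (fun c => @eval _ _ _ M e (unname_t name ts (Cst _ _ c)))) e t.
Proof.
elim/tind: t => //= [f us IH|f us IH].
- by congr (@iF0 _ _ _ M f _); rewrite -map_comp; apply: map_In.
- by congr (@iS _ _ _ M f _); rewrite -map_comp; apply: map_In.
Qed.

Lemma abstr_t_eval (M : structure) (e : nat -> dom M) xs (t : term) :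
  @eval _ _ _ M e (abstr_t xs t) =
  @eval _ _ _ (setSC M (@iS _ _ _ M) (fun c => if c \in xs then e c else iC M c)) e t.
Proof.
elim/tind: t => //= [c|f us IH|f us IH].
- by case: ifP.
- by congr (@iF0 _ _ _ M f _); rewrite -map_comp; apply: map_In.
- by congr (@iS _ _ _ M f _); rewrite -map_comp; apply: map_In.
Qed.

Lemma vars_t_eval (M : structure) (e1 e2 : nat -> dom M) (t : term) :
  (forall y, y \in vars_t t -> e1 y = e2 y) ->
  @eval _ _ _ M e1 t = @eval _ _ _ (setSC M (@iS _ _ _ M) (iC M)) e2 t.
Proof.
elim/tind: t => //= [n H|f us IH H|f us IH H].
- by apply: H; rewrite inE.
- congr (@iF0 _ _ _ M f _); apply: map_In => t Ht; apply: IH => // y Hy; apply: H; exact: in_flat Hy.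
- congr (@iS _ _ _ M f _); apply: map_In => t Ht; apply: IH => // y Hy; apply: H; exact: in_flat Hy.
Qed.

Lemma ground_indep (M : structure) (e1 e2 : nat -> dom M) (phi : form) :
  qf phi -> fv_f phi = [::] -> @holds _ _ _ M e1 phi <-> @holds _ _ _ M e2 phi.
Proof.
move=> Hq Hfv.
have H := @fmap_holds M (@iS _ _ _ M) (iC M) e1 e2 id id phi Hq.
rewrite !fmap_id in H; rewrite H; last first.
  move=> t Ht; apply: vars_t_eval => y Hy.
  by move: (terms_vars Hq Ht Hy); rewrite Hfv.
exact: agree_f.
Qed.


Lemma upd_eq (M : structure) (e : nat -> dom M) x d y : @upd _ _ _ M e x d y = if y == x then d else e y.
Proof. by []. Qed.

Lemma exfold (M : structure) (phi : form) xs (e : nat -> dom M) :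
  @holds _ _ _ M e (foldr (@FEx F0 P0 S) phi xs) <->
  exists e' : nat -> dom M, (forall y, y \notin xs -> e' y = e y) /\ @holds _ _ _ M e' phi.
Proof.
elim: xs e => [|x xs IH] e /=.
- split; first by move=> H; exists e.
  move=> [e' [He H]]; have <- // : e' = e.
  by apply: FunctionalExtensionality.functional_extensionality => y; apply: He.
- split.
  + move=> [d /IH [e' [He H]]]; exists e'; split => // y; rewrite inE negb_or => /andP[Hy1 Hy2].
    by rewrite He // upd_eq (negbTE Hy1).
  + move=> [e' [He H]]; exists (e' x); apply/IH; exists e'; split => // y Hy.
    rewrite upd_eq; case: eqP => [->//|/eqP Hyx]; apply: He; by rewrite inE negb_or Hyx.
Qed.

Lemma foldr_and (M : structure) (e : nat -> dom M) (l : seq form) :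
  @holds _ _ _ M e (foldr (@FAnd F0 P0 S) (FTrue _ _ _) l) <-> forall phi, List.In phi l -> @holds _ _ _ M e phi.
Proof.
elim: l => /= [|a l IH]; first by split.
rewrite IH; split; first by move=> [Ha Hl] phi [<-|]; auto.
by move=> H; split; auto.
Qed.

Lemma In_pairs (A : Type) (ts : seq A) a b :
  List.In (a, b) [seq (t1, t2) | t1 <- ts, t2 <- ts] <-> List.In a ts /\ List.In b ts.
Proof.
rewrite /allpairs_dep In_flat; split.
- move=> [x [Hx]]; rewrite List.in_map_iff => -[y [E Hy]]; case: E => <- <-; auto.
- move=> [Ha Hb]; exists a; split => //; rewrite List.in_map_iff; exists b; auto.
Qed.

Lemma zip_holds (M : structure) (e : nat -> dom M) (a b : seq term) : size a = size b ->
  (@holds _ _ _ M e (foldr (@FAnd F0 P0 S) (FTrue _ _ _) [seq FEq P0 p.1 p.2 | p <- zip a b])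
   <-> map (@eval _ _ _ M e) a = map (@eval _ _ _ M e) b).
Proof.
elim: a b => [|x a IH] [|y b] //= Hs.
rewrite IH; last by case: Hs.
split; first by move=> [-> ->].
by case => -> ->.
Qed.

Lemma In_has (A : Type) (p : pred A) (l : seq A) x : List.In x l -> p x -> has p l.
Proof. elim: l => //= a l IH [<-|H] Hp; first by rewrite Hp. by rewrite IH ?orbT. Qed.

Lemma has_In (A : Type) (p : pred A) (l : seq A) : has p l -> exists x, List.In x l /\ p x.
Proof. elim: l => //= a l IH /orP[H|/IH [x [H1 H2]]]; [exists a|exists x]; auto. Qed.

Lemma unname_hit name (ts : seq term) u :
  (forall u1 u2, List.In u1 ts -> List.In u2 ts -> name u1 = name u2 -> u1 = u2) ->
  List.In u ts -> unname_t name ts (Cst _ _ (name u)) = u.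
Proof.
move=> Hinj Hu /=.
have Hh : has (fun v => name v == name u) ts by apply: (In_has Hu).
rewrite -has_find Hh; apply: Hinj => //; first by apply: In_nth; rewrite -has_find.
by apply/eqP; exact: (@nth_find _ (Cst F0 S (name u)) _ _ Hh).
Qed.

Lemma unname_miss name (ts : seq term) c :
  (forall u, List.In u ts -> name u <> c) -> unname_t name ts (Cst _ _ c) = Cst _ _ c.
Proof.
move=> H /=; case: ifP => // Hi; exfalso; move: Hi; rewrite -has_find => /has_In [u [Hu /eqP]].
exact: H.
Qed.

Lemma unname_cst name (ts : seq term) d :
  unname_t name ts (Cst _ _ d) = Cst _ _ d \/
  (exists u, List.In u ts /\ unname_t name ts (Cst _ _ d) = u /\ name u = d).
Proof.
rewrite /=; case: ifP => Hi; last by left.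
right; exists (nth (Cst F0 S d) ts (find (fun u => name u == d) ts)); split => //; first exact: In_nth.
split => //; apply/eqP; apply: (@nth_find _ (Cst F0 S d) (fun u => name u == d)); by rewrite has_find.
Qed.


Lemma unname_consts name ts (t : term) c :
  c \in consts_t (unname_t name ts t) ->
  (c \in consts_t t /\ unname_t name ts (Cst _ _ c) = Cst _ _ c) \/ exists u, List.In u ts /\ c \in consts_t u.
Proof.
elim/tind: t => [n|d|f us IH|f us IH] //.
- case: (unname_cst name ts d) => [E|[u [Hu [E _]]]]; rewrite E.
  + move=> H; have Hcd : c = d by move: H; rewrite /consts_t mem_seq1 => /eqP.
    by subst c; left; rewrite /consts_t mem_seq1 eqxx.
  + by move=> H; right; exists u.
- rewrite /= -map_comp => /flat_in [t [Ht /(IH t Ht) [[H1 H2]|H]]]; last by right.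
  by left; split => //; exact: in_flat H1.
- rewrite /= -map_comp => /flat_in [t [Ht /(IH t Ht) [[H1 H2]|H]]]; last by right.
  by left; split => //; exact: in_flat H1.
Qed.

Lemma unname_vars name ts (t : term) c :
  c \in vars_t (unname_t name ts t) -> c \in vars_t t \/ exists u, List.In u ts /\ c \in vars_t u.
Proof.
elim/tind: t => [n|d|f us IH|f us IH].
- by move=> H; left.
- case: (unname_cst name ts d) => [E|[u [Hu [E _]]]]; rewrite E //.
  by move=> H; right; exists u.
- rewrite /= -map_comp => /flat_in [t [Ht /(IH t Ht) [H1|H]]]; last by right.
  by left; exact: in_flat H1.
- rewrite /= -map_comp => /flat_in [t [Ht /(IH t Ht) [H1|H]]]; last by right.
  by left; exact: in_flat H1.
Qed.

Lemma unname_symS name ts (t : term) c :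
  c \in symS_t (unname_t name ts t) -> c \in symS_t t \/ exists u, List.In u ts /\ c \in symS_t u.
Proof.
elim/tind: t => [n|d|f us IH|f us IH].
- by move=> H; left.
- case: (unname_cst name ts d) => [E|[u [Hu [E _]]]]; rewrite E //.
  by move=> H; right; exists u.
- rewrite /= -map_comp => /flat_in [t [Ht /(IH t Ht) [H1|H]]]; last by right.
  by left; exact: in_flat H1.
- rewrite /= -map_comp inE => /orP [/eqP ->|]; first by left; rewrite inE eqxx.
  move=> /flat_in [t [Ht /(IH t Ht) [H1|H]]]; last by right.
  by left; rewrite inE (in_flat Ht H1) orbT.
Qed.

Lemma unname_wf ar0 arS name ts (t : term) :
  term_wf ar0 arS t -> (forall u, List.In u ts -> term_wf ar0 arS u) ->
  term_wf ar0 arS (unname_t name ts t).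
Proof.
move=> Ht Hts; elim/tind: t Ht => [n|d|f us IH|f us IH] //.
- case: (unname_cst name ts d) => [->|[u [Hu [-> _]]]] //; auto.
- rewrite /= size_map => /andP[-> H] /=; apply: In_all => t; rewrite List.in_map_iff => -[v [<- Hv]].
  apply: IH => //; exact: all_In H Hv.
- rewrite /= size_map => /andP[-> H] /=; apply: In_all => t; rewrite List.in_map_iff => -[v [<- Hv]].
  apply: IH => //; exact: all_In H Hv.
Qed.


Lemma terms_ext (phi : form) t u :
  List.In t (terms_f phi) -> List.In u (ext_t t) -> List.In u (ext_f phi).
Proof.
elim: phi => //= [v w|p ts|a IHa b IHb|a IHa b IHb|a IHa b IHb].
- by move=> [<-|[<-|[]]] H; rewrite List.in_app_iff; auto.
- by move=> Ht Hu; rewrite In_flat; exists t.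
- by rewrite !List.in_app_iff => -[H|H] Hu; auto.
- by rewrite !List.in_app_iff => -[H|H] Hu; auto.
- by rewrite !List.in_app_iff => -[H|H] Hu; auto.
Qed.

Lemma mem_map_In (A : Type) (B : eqType) (f : A -> B) (l : seq A) c :
  c \in map f l -> exists x, List.In x l /\ f x = c.
Proof. elim: l => //= a l IH; rewrite inE => /orP[/eqP ->|/IH [x [H1 H2]]]; [exists a|exists x]; auto. Qed.

Lemma In_mem_map (A : Type) (B : eqType) (f : A -> B) (l : seq A) x :
  List.In x l -> f x \in map f l.
Proof. elim: l => //= a l IH [<-|H]; rewrite inE ?eqxx ?IH ?orbT //. Qed.

Lemma ground_eval (M : structure) (e1 e2 : nat -> dom M) (t : term) :
  vars_t t = [::] -> @eval _ _ _ M e1 t = @eval _ _ _ M e2 t.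
Proof.
move=> Hv; rewrite (@vars_t_eval M e1 e2) ?Hv // agree_t //.
Qed.

Lemma qf_foldr (l : seq form) : (forall phi, List.In phi l -> qf phi) -> qf (foldr (@FAnd F0 P0 S) (FTrue _ _ _) l).
Proof. elim: l => //= a l IH H; rewrite H ?IH //; auto. Qed.

Lemma consts_exfold (phi : form) xs c : c \in consts_f (foldr (@FEx F0 P0 S) phi xs) -> c \in consts_f phi.
Proof. by elim: xs. Qed.

Lemma abstr_consts xs (t : term) c : c \in consts_t (abstr_t xs t) -> c \in consts_t t /\ c \notin xs.
Proof.
elim/tind: t => [n|d|f us IH|f us IH] //=.
- case: ifP => // Hd H; have Hcd : c = d by move: H; rewrite /consts_t mem_seq1 => /eqP.
  by subst c; rewrite /consts_t mem_seq1 eqxx Hd.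
- rewrite -map_comp => /flat_in [t [Ht /(IH t Ht) [H1 H2]]]; split => //; exact: in_flat H1.
- rewrite -map_comp => /flat_in [t [Ht /(IH t Ht) [H1 H2]]]; split => //; exact: in_flat H1.
Qed.

Lemma symS_cst_app (f g : S) (args : seq term) : all (@is_cst F0 S) args ->
  f \in symS_t (AppS g args) -> f = g.
Proof.
move=> Ha; rewrite /= inE => /orP[/eqP //|/flat_in [p [Hp]]].
by move: (all_In Ha Hp); case: p Hp.
Qed.

End H.
Arguments setSC {F0 P0 S} M h g.

Section Main.
Variables (F0 P0 : Type) (S : eqType)
  (ar0 : F0 -> nat) (arP : P0 -> nat) (arS : S -> nat)
  (is_s : S -> bool)
  (T0 : form F0 P0 S -> Prop)
  (HT0 : Pi0_theory ar0 arP arS T0)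
  (G : seq (clause F0 P0 S))
  (HG : forall C, List.In C G -> [/\ ground_clause ar0 arP arS C, flat_clause C & linear_clause C])
  (Cs : seq nat)
  (HCs : {subset Cs <= consts_G G})
  (name : term F0 S -> nat)
  (Hname_inj : forall t1 t2, List.In t1 (est G) -> List.In t2 (est G) ->
                 name t1 = name t2 -> t1 = t2)
  (Hname_fresh : forall t, List.In t (est G) -> name t \notin consts_G G).

Notation term := (term F0 S).
Notation form := (form F0 P0 S).
Notation structure := (structure F0 P0 S).
Notation phiG := (clauses_form G).

Lemma lit_props (l : literal F0 P0 S) :
  [/\ qf (lit_form l) = qf l.2, fv_f (lit_form l) = fv_f l.2, flat_f (lit_form l) = flat_f l.2,
      form_wf ar0 arP arS (lit_form l) = form_wf ar0 arP arS l.2 & ext_f (lit_form l) = ext_f l.2].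
Proof. by rewrite /lit_form; case: ifP. Qed.

Lemma G_props : [/\ qf phiG, fv_f phiG = [::], flat_f phiG & form_wf ar0 arP arS phiG].
Proof.
rewrite /clauses_form; elim: G HG => [|C G' IH] HG' //=.
have [/= Hq Hfv Hfl Hwf] := IH (fun C H => HG' C (or_intror H)).
have [Hgc Hflc _] := HG' C (or_introl erefl).
have : [/\ qf (clause_form C), fv_f (clause_form C) = [::], flat_f (clause_form C) & form_wf ar0 arP arS (clause_form C)].
  rewrite /clause_form; elim: C Hgc Hflc {HG'} => [|l C IHC] //= /andP[Hl Hgc] /andP[Hfl1 Hflc].
  have [Hq' Hfv' Hfl' Hwf'] := IHC Hgc Hflc.
  have [E1 E2 E3 E4 _] := lit_props l.
  move: Hl => /andP[/andP[_ /andP[Hq1 /eqP Hv1]] Hw1].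
  by rewrite E1 E2 E3 E4 Hq1 Hv1 Hfl1 Hw1 Hq' Hfv' Hfl' Hwf'.
by move=> [-> -> -> ->]; rewrite Hq Hfv Hfl Hwf.
Qed.

Lemma ext_G : ext_f phiG = est G.
Proof.
rewrite /clauses_form /est; elim: G => //= C G' ->; congr (_ ++ _).
rewrite /clause_form /ext_clause; elim: C => //= l C ->.
by have [_ _ _ _ ->] := lit_props l.
Qed.

Lemma est_props u : List.In u (est G) ->
  [/\ exists f args, u = AppS f args /\ all (@is_cst F0 S) args,
      vars_t u = [::], {subset consts_t u <= consts_G G},
      {subset symS_t u <= symS_f phiG} & term_wf ar0 arS u].
Proof.
have [Hq Hfv Hfl Hwf] := G_props.
rewrite -ext_G => /ext_terms [t [Ht Hu]]; split.
- exact: ext_flat Hu (terms_flat Hfl Ht).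
- case E: (vars_t u) => [|y l] //; have : y \in vars_t u by rewrite E mem_head.
  by move=> /(ext_vars Hu) /(terms_vars Hq Ht); rewrite Hfv.
- move=> c /(ext_consts Hu); exact: terms_consts Ht.
- move=> c /(ext_symS Hu); exact: terms_symS Ht.
- exact: ext_wf Hu (terms_wf Hwf Ht).
Qed.


Definition keptS := kept is_s name Cs G.
Definition xs := undup [seq c <- consts_f (@G1 F0 P0 S name G) | c \notin keptS].

Lemma kept_notxs c : c \in keptS -> c \notin xs.
Proof. by move=> H; rewrite mem_undup mem_filter H. Qed.

Lemma notxs_kept c : c \in consts_f (@G1 F0 P0 S name G) -> c \notin xs -> c \in keptS.
Proof. by move=> H; rewrite mem_undup mem_filter H andbT negbK. Qed.

Lemma step2E : step2 is_s name Cs G = foldr (@FEx F0 P0 S) (abstr_f xs (@G1 F0 P0 S name G)) xs.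
Proof. by []. Qed.

Lemma estS_est u : List.In u (estS is_s G) -> List.In u (est G) /\ is_s_term is_s u.
Proof. by rewrite /estS In_filter. Qed.

Lemma Cbar_G c : c \in Cbar is_s Cs G -> c \in consts_G G.
Proof.
rewrite /Cbar mem_cat => /orP[/HCs //|].
rewrite /argsS => /flat_in [u [/estS_est [Hu _] Hc]].
by have [_ _ H _ _] := est_props Hu; apply: H.
Qed.

Lemma notname c : c \in consts_G G -> forall u, List.In u (est G) -> name u <> c.
Proof. by move=> Hc u Hu E; move: (Hname_fresh Hu); rewrite E Hc. Qed.

Lemma notname' c : c \in consts_G G -> forall u, List.In u (estS is_s G) -> name u <> c.
Proof. by move=> Hc u /estS_est [Hu _]; apply: notname. Qed.

Lemma injS u1 u2 : List.In u1 (estS is_s G) -> List.In u2 (estS is_s G) -> name u1 = name u2 -> u1 = u2.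
Proof. by move=> /estS_est [H1 _] /estS_est [H2 _]; apply: Hname_inj. Qed.

Lemma con_pair_qf (t1 t2 : term) : qf (con_pair P0 name t1 t2).
Proof.
case: t1 => // f a; case: t2 => // g b /=; case: ifP => //= _.
rewrite andbT; apply: qf_foldr => phi; rewrite List.in_map_iff => -[p [<- _]] //.
Qed.

Lemma G1_qf : qf (@G1 F0 P0 S name G).
Proof.
have [Hq _ _ _] := G_props.
rewrite /G1 /= purify_fmap qf_fmap Hq /=; apply: qf_foldr => phi.
by rewrite List.in_map_iff => -[p [<- _]]; apply: con_pair_qf.
Qed.

Lemma model_set (M : structure) h g : model T0 M -> model T0 (setSC M h g).
Proof.
move=> HM phi Hphi e; have [_ Hs Hc _] := HT0 Hphi.
apply/agree_f; [by rewrite Hc|by rewrite Hs|exact: HM].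
Qed.


Variables (Gamma1 : form)
  (HGamma1 : [/\ qf Gamma1 && form_wf ar0 arP arS Gamma1, symS_f Gamma1 = [::],
                 {subset consts_f Gamma1 <= consts_f (step2 is_s name Cs G)},
                 fv_f Gamma1 = [::] &
                 forall M, model T0 M -> forall e : nat -> dom M,
                   holds e (step2 is_s name Cs G) <-> holds e Gamma1]).

Definition psi := step4 is_s name G Gamma1.

Definition gpsi (M : structure) (e : nat -> dom M) :=
  fun c => @eval _ _ _ M e (unname_t name (estS is_s G) (Cst _ _ c)).

Lemma Gamma1_qf : qf Gamma1.
Proof. by case: HGamma1 => /andP[]. Qed.

Lemma sem_psi (M : structure) (HM : model T0 M) (e : nat -> dom M) :
  @holds _ _ _ M e psi <-> @holds _ _ _ (setSC M (@iS _ _ _ M) (gpsi e)) e (step2 is_s name Cs G).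
Proof.
have [_ _ _ _ Heq] := HGamma1.
rewrite (Heq _ (@model_set M (@iS _ _ _ M) (gpsi e) HM)) /psi /step4 unname_fmap -[X in _ <-> holds _ X]fmap_id.
apply: fmap_holds; first exact: Gamma1_qf.
move=> t _; exact: unname_t_eval.
Qed.

Lemma consts_step2 c : c \in consts_f (step2 is_s name Cs G) -> c \in keptS.
Proof.
rewrite step2E => /consts_exfold; rewrite abstr_fmap => /consts_fmap [t [Ht /abstr_consts [H1 H2]]].
apply: notxs_kept => //; exact: terms_consts Ht H1.
Qed.

Lemma psi_ground : ground psi && form_wf ar0 arP arS psi.
Proof.
have [/andP[Hq Hw] _ _ Hfv _] := HGamma1.
rewrite /ground /psi /step4 unname_fmap qf_fmap Hq /=; apply/andP; split.
- case E: (fv_f _) => [|y l] //; have : y \in fv_f (fmap (unname_t name (estS is_s G)) Gamma1) by rewrite E mem_head.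
  move=> /(fv_fmap Hq) [t [Ht /unname_vars [H|[u [/estS_est [Hu _] H]]]]].
  + by move: (terms_vars Hq Ht H); rewrite Hfv.
  + by have [_ E' _ _ _] := est_props Hu; rewrite E' in H.
- apply: wf_fmap => // t Ht; apply: unname_wf; first exact: terms_wf Hw Ht.
  by move=> u /estS_est [Hu _]; have [_ _ _ _ ?] := est_props Hu.
Qed.

Lemma psi_symS : all is_s (symS_f psi).
Proof.
have [/andP[Hq Hw] Hs _ _ _] := HGamma1.
apply/allP => f; rewrite /psi /step4 unname_fmap => /symS_fmap [t [Ht /unname_symS [H|[u [Hu H]]]]].
- by move: (terms_symS Ht H); rewrite Hs.
- have [Hu' Hsu] := estS_est Hu; have [[g [args [Eu Ha]]] _ _ _ _] := est_props Hu'.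
  by subst u; rewrite (symS_cst_app Ha H).
Qed.

Lemma psi_consts : {subset consts_f psi <= Cbar is_s Cs G}.
Proof.
have [/andP[Hq Hw] _ Hc _ _] := HGamma1.
move=> c; rewrite /psi /step4 unname_fmap => /consts_fmap [t [Ht /unname_consts [[H E]|[u [Hu H]]]]].
- move: (consts_step2 (Hc _ (terms_consts Ht H))); rewrite /keptS /kept mem_cat => /orP[//|].
  move=> /mem_map_In [u [Hu Hn]]; subst c.
  rewrite (unname_hit injS Hu) in E.
  by have [[g [args [Eu _]]] _ _ _ _] := est_props (proj1 (estS_est Hu)); subst u.
- rewrite /Cbar mem_cat /argsS; apply/orP; right; exact: in_flat Hu H.
Qed.


Lemma Cbar_miss (M : structure) (e : nat -> dom M) c : c \in Cbar is_s Cs G -> gpsi e c = iC M c.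
Proof. by move=> Hc; rewrite /gpsi unname_miss // => u; apply: notname'; apply: Cbar_G. Qed.

Lemma psi_entailed : entailsT T0 phiG psi.
Proof.
move=> M HM e HGe; apply/(sem_psi HM); rewrite step2E; apply/exfold.
pose g0 := fun c => @eval _ _ _ M e (unname_t name (est G) (Cst _ _ c)).
pose e' := fun y => if y \in xs then g0 y else e y.
exists e'; split; first by move=> y /negbTE; rewrite /e' => ->.
rewrite abstr_fmap.
pose gN := fun c => if c \in xs then e' c else gpsi e c.
have Hab := @fmap_holds _ _ _ (setSC M (@iS _ _ _ M) (gpsi e)) (@iS _ _ _ M) gN e' e' (abstr_t xs) id _ G1_qf
   (fun t _ => abstr_t_eval _ _ _).
rewrite fmap_id in Hab; apply/Hab.
pose M0 := setSC M (@iS _ _ _ M) g0.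
have HgN : forall c, c \in consts_f (@G1 F0 P0 S name G) -> gN c = g0 c.
  move=> c Hc; rewrite /gN; case: ifP => Hx; first by rewrite /e' Hx.
  move: (notxs_kept Hc (negbT Hx)); rewrite /keptS /kept mem_cat => /orP[HC|].
  + rewrite Cbar_miss // /g0 unname_miss // => u; apply: notname; exact: Cbar_G.
  + move=> /mem_map_In [u [Hu <-]]; rewrite /gpsi /g0 (unname_hit injS Hu).
    by rewrite (unname_hit Hname_inj (proj1 (estS_est Hu))).
apply/(@agree_f _ _ _ M0 (@iS _ _ _ M) gN _ HgN) => //.
have [Hq Hfv Hfl Hwf] := G_props.
have Hg0c : forall c, c \in consts_G G -> g0 c = iC M c.
  by move=> c Hc; rewrite /g0 unname_miss // => u; apply: notname.
have Hg0u : forall u, List.In u (est G) -> g0 (name u) = @eval _ _ _ M e u.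
  by move=> u Hu; rewrite /g0 (unname_hit Hname_inj Hu).
split.
-
  have Hp : forall t, List.In t (terms_f phiG) ->
      @eval _ _ _ M e' (id t) = @eval _ _ _ (setSC M (@iS _ _ _ M) g0) e' (purify_t name t).
    move=> t Ht; apply: purify_t_eval.
    + by move=> c Hc; rewrite Hg0c // (terms_consts Ht Hc).
    + move=> u Hu; have Hu' : List.In u (est G) by rewrite -ext_G; exact: terms_ext Ht Hu.
      have [_ Hv _ _ _] := est_props Hu'.
      by rewrite Hg0u // (ground_eval _ e Hv).
  have Hiff := @fmap_holds _ _ _ M (@iS _ _ _ M) g0 e' e' id (purify_t name) _ Hq Hp.
  rewrite fmap_id in Hiff; rewrite purify_fmap; apply/Hiff.
  exact: (proj1 (ground_indep e e' Hq Hfv) HGe).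
-
  apply/foldr_and => phi; rewrite List.in_map_iff => -[[t1 t2] [<- /In_pairs [H1 H2]]].
  have [[f [a [E1 Ha]]] _ Hc1 _ _] := est_props H1.
  have [[g [b [E2 Hb]]] _ Hc2 _ _] := est_props H2.
  have Hmap : forall (f' : S) (l : seq term), all (@is_cst F0 S) l -> {subset consts_t (AppS f' l) <= consts_G G} ->
     map (@eval _ _ _ M0 e') l = map (@eval _ _ _ M e) l.
    move=> f' l Hl Hcl; apply: map_In => p Hp; move: (all_In Hl Hp) (Hcl).
    case: p Hp => // d Hp _ Hcl' /=; rewrite Hg0c //; apply: Hcl'; apply: (in_flat Hp); by rewrite mem_seq1.
  rewrite /= E1 E2 /=; case: ifP => //= /andP[/eqP Efg /eqP Es].
  move=> /(zip_holds _ Es); rewrite (Hmap f a) -?E1 // (Hmap g b) -?E2 // => Eab.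
  rewrite /M0 /= !Hg0u // E1 E2 /= Efg Eab //.
Qed.


Lemma psi_unif (theta : form) : ground theta ->
  (forall f, f \in symS_f theta -> f \in symS_f phiG -> is_s f) ->
  (forall c, c \in consts_f theta -> c \in consts_f phiG -> c \in Cbar is_s Cs G) ->
  entailsT T0 phiG theta -> entailsT T0 psi theta.
Proof.
move=> /andP[Hqt /eqP Hfvt] Hsym Hcst Hent M HM e /(sem_psi HM); rewrite step2E => /exfold [e' [_ Hab]].
rewrite abstr_fmap in Hab.
pose gN := fun c => if c \in xs then e' c else gpsi e c.
have := @fmap_holds _ _ _ (setSC M (@iS _ _ _ M) (gpsi e)) (@iS _ _ _ M) gN e' e' (abstr_t xs) id _ G1_qf
   (fun t _ => abstr_t_eval _ _ _).
rewrite fmap_id => Hiff; move/Hiff: Hab.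
pose N := setSC M (@iS _ _ _ M) gN.
move=> HN; have : @holds _ _ _ N e' (@G1 F0 P0 S name G) by exact: HN.
clear HN Hiff => /= [[Hpur HCon]].
have [Hq Hfv Hfl Hwf] := G_props.
have HgNC : forall c, c \in Cbar is_s Cs G -> gN c = iC M c.
  move=> c Hc; rewrite /gN (negbTE (kept_notxs _)) ?Cbar_miss //.
  by rewrite /keptS /kept mem_cat Hc.
have HgNu : forall u, List.In u (estS is_s G) -> gN (name u) = @eval _ _ _ M e u.
  move=> u Hu; rewrite /gN (negbTE (kept_notxs _)); last first.
    by rewrite /keptS /kept mem_cat (In_mem_map name Hu) orbT.
  by rewrite /gpsi (unname_hit injS Hu).
pose gC := fun c => if (c \in consts_G G) && (c \notin Cbar is_s Cs G) then gN c else iC M c.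
have HgC : forall c, c \in consts_G G -> gC c = gN c.
  move=> c Hc; rewrite /gC Hc /=; case: ifP => // /negbFE H; by rewrite HgNC.
pose Pr := fun (f : S) (vs : seq (dom M)) (v : dom M) =>
  (exists args, List.In (AppS f args) (est G) /\ map (@eval _ _ _ N e') args = vs /\ v = gN (name (AppS f args))) \/
  (~ (exists args, List.In (AppS f args) (est G) /\ map (@eval _ _ _ N e') args = vs) /\ v = @iS _ _ _ M f vs).
pose hS := fun (f : S) (vs : seq (dom M)) =>
  if is_s f then @iS _ _ _ M f vs else ClassicalEpsilon.epsilon (inhabits (@iS _ _ _ M f vs)) (Pr f vs).
have HPr : forall f vs, Pr f vs (ClassicalEpsilon.epsilon (inhabits (@iS _ _ _ M f vs)) (Pr f vs)).
  move=> f vs; apply: ClassicalEpsilon.epsilon_spec.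
  case: (Classical_Prop.classic (exists args, List.In (AppS f args) (est G) /\ map (@eval _ _ _ N e') args = vs)).
  + move=> [args [H1 H2]]; exists (gN (name (AppS f args))); left; exists args; auto.
  + by move=> Hn; exists (@iS _ _ _ M f vs); right.
have HhS : forall f args, ~~ is_s f -> List.In (AppS f args) (est G) ->
    hS f (map (@eval _ _ _ N e') args) = gN (name (AppS f args)).
  move=> f args Hf Hin; rewrite /hS (negbTE Hf).
  case: (HPr f (map (@eval _ _ _ N e') args)) => [[args' [H1 [H2 ->]]]|[Hn _]]; last first.
    by exfalso; apply: Hn; exists args.
  move/foldr_and: HCon => /(_ (con_pair P0 name (AppS f args') (AppS f args))) HC.
  have Hs : size args' = size args by rewrite -(size_map (@eval _ _ _ N e') args') H2 size_map.
  move: HC; rewrite /= eqxx Hs eqxx /= => HC.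
  apply: HC; first by rewrite List.in_map_iff; exists (AppS f args', AppS f args); split; [by rewrite /= eqxx Hs eqxx | by apply (proj2 (In_pairs _ _ _)); split].
  exact/(zip_holds _ Hs).
pose M' := setSC M hS gC.
have HM'G : @holds _ _ _ M' e' phiG.
  have Hp2 : forall t, List.In t (terms_f phiG) ->
      @eval _ _ _ M' e' (id t) = @eval _ _ _ (setSC M' (@iS _ _ _ M) gN) e' (purify_t name t).
    move=> t Ht; apply: purify_t_eval.
    + by move=> c Hc; rewrite /= HgC // (terms_consts Ht Hc).
    + move=> u Hu; have Hu' : List.In u (est G) by rewrite -ext_G; exact: terms_ext Ht Hu.
      have [[f [args [Eu Ha]]] _ Hcu _ _] := est_props Hu'.
      have Hmap : map (@eval _ _ _ M' e') args = map (@eval _ _ _ N e') args.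
        apply: map_In => p Hp; move: (all_In Ha Hp); case: p Hp => // d Hp _ /=.
        apply: HgC; apply: Hcu; rewrite Eu; apply: (in_flat Hp); by rewrite mem_seq1.
      subst u; rewrite /= Hmap.
      case Hf: (is_s f); last by rewrite HhS ?Hf.
      have HuS : List.In (AppS f args) (estS is_s G) by rewrite /estS In_filter.
      rewrite /hS Hf HgNu //=; congr (@iS _ _ _ M f _).
      apply: map_In => p Hp; move: (all_In Ha Hp); case: p Hp => // d Hp _ /=.
      apply: HgNC; rewrite /Cbar mem_cat /argsS; apply/orP; right.
      apply: (in_flat HuS); apply: (in_flat Hp); by rewrite mem_seq1.
  have Hiff2 := @fmap_holds _ _ _ M' (@iS _ _ _ M) gN e' e' id (purify_t name) _ Hq Hp2.
  rewrite fmap_id in Hiff2; apply/Hiff2; by rewrite -purify_fmap.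
have Hth := Hent M' (@model_set M hS gC HM) e' HM'G.
apply: (proj1 (@ground_indep _ _ _ M e' e theta Hqt Hfvt)).
move: Hth; apply: (proj1 (@agree_f _ _ _ M hS gC theta _ _ e')).
- move=> c Hc; rewrite /gC; case: ifP => // /andP[Hc1 Hc2].
  by move: Hc2; rewrite (Hcst c Hc Hc1).
- move=> f Hf; apply: FunctionalExtensionality.functional_extensionality => vs.
  rewrite /hS; case: ifP => // Hs.
  case: (HPr f vs) => [[args [H1 _]]|[_ ->]] //; exfalso.
  have [_ _ _ HsS _] := est_props H1.
  by move: (Hsym f Hf (HsS f (mem_head _ _))); rewrite Hs.
Qed.


Lemma main_in : gen_unif_interp ar0 arP arS is_s T0 (Cbar is_s Cs G) (clauses_form G)
    (step4 is_s name G Gamma1).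
Proof.
split.
- exact: psi_ground.
- exact: psi_symS.
- exact: psi_consts.
- exact: psi_entailed.
- move=> theta Hg _ Hs Hc Hent; exact: psi_unif.
Qed.

End Main.

Theorem mainTheorem3
  (F0 P0 : Type) (S : eqType)
  (ar0 : F0 -> nat) (arP : P0 -> nat) (arS : S -> nat)
  (is_s : S -> bool)
  (T0 : form F0 P0 S -> Prop)
  (HT0 : Pi0_theory ar0 arP arS T0)
  (HQE : allows_QE ar0 arP arS T0)
  (G : seq (clause F0 P0 S))
  (HG : forall C, List.In C G -> [/\ ground_clause ar0 arP arS C, flat_clause C & linear_clause C])
  (Cs : seq nat)
  (HCs : {subset Cs <= consts_G G})
  (name : term F0 S -> nat)
  (Hname_inj : forall t1 t2, List.In t1 (est G) -> List.In t2 (est G) ->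
                 name t1 = name t2 -> t1 = t2)
  (Hname_fresh : forall t, List.In t (est G) -> name t \notin consts_G G)
  (Gamma1 : form F0 P0 S)
  (HGamma1 : [/\ qf Gamma1 && form_wf ar0 arP arS Gamma1, symS_f Gamma1 = [::],
                 {subset consts_f Gamma1 <= consts_f (step2 is_s name Cs G)},
                 fv_f Gamma1 = [::] &
                 forall M, model T0 M -> forall e : nat -> dom M,
                   holds e (step2 is_s name Cs G) <-> holds e Gamma1]) :
  gen_unif_interp ar0 arP arS is_s T0 (Cbar is_s Cs G) (clauses_form G)
    (step4 is_s name G Gamma1).
Proof. exact: (main_in HT0 HG HCs Hname_inj Hname_fresh HGamma1). Qed.
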